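(* Let $\alpha\neq0$ and $b<0$. Then the set $\mathcal C=\bigcup_{u\in B}r_u$ is the unique control set of the system $\dot x=u\alpha x$, $\dot y=by+ux$ on $G$. Moreover, $\mathcal C=\operatorname{cl}\mathcal O^+(p)$ for every $p\in\mathcal C$.
   Context: Let $G=\{(x,y)\in\mathbb{R}^2:x>0\}$. Fix $\Omega=[u_*,u^*]$ with $u_*<0<u^*$. The admissible controls $\mathcal U$ are the piecewise constant functions $\mathbb{R}\to\Omega$. We write $\varphi(t,p,u)$ for the solutions and $\mathcal O^+(p)=\{\varphi(t,p,u):t\ge0,u\in\mathcal U\}$; closures are taken in $G$. For $u\in\mathbb{R}$ with $u\alpha\neq b$, set $m_u=\frac{u}{u\alpha-b}$ and $r_u=\{(x,y)\in G:y=m_ux\}$. Let $B=\{u\in\Omega:u\alpha-b>0\}$. A control set is a subset $\mathcal C\subset G$ that is maximal with respect to inclusion among the sets satisfying both of the following: (i) every $p\in\mathcal C$ admits $u\in\mathcal U$ with $\varphi(t,p,u)\in\mathcal C$ for all $t\ge0$; (ii) $\mathcal C\subset\operatorname{cl}\mathcal O^+(p)$ for all $p\in\mathcal C$. (This system is the image of $\Sigma$ with $\alpha(a\alpha+b\beta)\neq0$, $b<0$ under the map $(x,y)\mapsto(x,\gamma^{-1}(a(x-1)+by))$, where $\gamma=a\alpha+b\beta$.) *)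

(* Defs.v *)
From Stdlib Require Import Reals Lra.
Open Scope R_scope.

Definition pt := (R * R)%type.

Definition inG (p : pt) : Prop := 0 < fst p.

Definition piecewise_constant (u : R -> R) : Prop :=
  forall a c, a < c ->
    exists (n : nat) (t : nat -> R),
      t O = a /\ t n = c /\
      (forall i, (i < n)%nat -> t i < t (S i)) /\
      (forall i, (i < n)%nat ->
         exists v, forall s, t i < s < t (S i) -> u s = v).

Definition admissible (ul uh : R) (u : R -> R) : Prop :=
  (forall t, ul <= u t <= uh) /\ piecewise_constant u.

Definition locally_const (u : R -> R) (t : R) : Prop :=
  exists d, 0 < d /\ forall s, Rabs (s - t) < d -> u s = u t.

(* phi is the solution (for t >= 0) of  x' = u alpha x,  y' = b y + u x
   starting at p under control u: continuous, and satisfying the ODE at every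
   time t > 0 where the control is locally constant (i.e. away from switching
   times). *)
Definition is_solution (alpha b : R) (u : R -> R) (p : pt) (phi : R -> pt) : Prop :=
  phi 0 = p /\
  (forall t, 0 <= t ->
     continuity_pt (fun s => fst (phi s)) t /\
     continuity_pt (fun s => snd (phi s)) t) /\
  (forall t, 0 < t -> locally_const u t ->
     derivable_pt_lim (fun s => fst (phi s)) t (u t * alpha * fst (phi t)) /\
     derivable_pt_lim (fun s => snd (phi s)) t (b * snd (phi t) + u t * fst (phi t))).

Definition orbit_plus (alpha b ul uh : R) (p : pt) (q : pt) : Prop :=
  exists u phi T, admissible ul uh u /\ is_solution alpha b u p phi /\
                  0 <= T /\ phi T = q.

Definition closureG (S : pt -> Prop) (q : pt) : Prop :=
  inG q /\
  forall eps, 0 < eps ->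
    exists s, S s /\ Rabs (fst s - fst q) < eps /\ Rabs (snd s - snd q) < eps.

Definition control_set_conditions (alpha b ul uh : R) (C : pt -> Prop) : Prop :=
  (forall p, C p -> inG p) /\
  (forall p, C p ->
     exists u phi, admissible ul uh u /\ is_solution alpha b u p phi /\
                   forall t, 0 <= t -> C (phi t)) /\
  (forall p q, C p -> C q -> closureG (orbit_plus alpha b ul uh p) q).

Definition is_control_set (alpha b ul uh : R) (C : pt -> Prop) : Prop :=
  control_set_conditions alpha b ul uh C /\
  forall D, control_set_conditions alpha b ul uh D ->
    (forall p, C p -> D p) -> forall p, D p -> C p.

Definition m_u (alpha b u : R) : R := u / (u * alpha - b).

Definition inB (alpha b ul uh u : R) : Prop :=
  ul <= u <= uh /\ u * alpha - b > 0.

Definition r_u (alpha b u : R) (p : pt) : Prop :=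
  inG p /\ snd p = m_u alpha b u * fst p.

Definition Cset (alpha b ul uh : R) (p : pt) : Prop :=
  exists u, inB alpha b ul uh u /\ r_u alpha b u p.

(* Main.v *)
Require Import Defs.
From Stdlib Require Import Reals Lra Lia Classical.
From Coquelicot Require Import Coquelicot.
Open Scope R_scope.

Lemma piece_mono (f : R -> R) a c : a < c ->
  (forall t, a <= t <= c -> continuity_pt f t) ->
  (forall t, a < t < c -> exists l, derivable_pt_lim f t l /\ 0 <= l) ->
  f a <= f c.
Proof.
  intros Hac Hc Hd.
  set (df := fun x => if Rlt_dec a x then if Rlt_dec x c then Derive f x else 0 else 0).
  destruct (MVT_gen f a c df) as [x [Hx He]].
  - intros x Hx. rewrite Rmin_left in Hx by lra. rewrite Rmax_right in Hx by lra.
    destruct (Hd x Hx) as [l [Hl _]].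
    apply is_derive_Reals in Hl. unfold df.
    destruct (Rlt_dec a x); [|lra]. destruct (Rlt_dec x c); [|lra].
    rewrite (is_derive_unique _ _ _ Hl). exact Hl.
  - intros x Hx. rewrite Rmin_left in Hx by lra. rewrite Rmax_right in Hx by lra. apply Hc; lra.
  - assert (0 <= df x).
    { unfold df. destruct (Rlt_dec a x); [|lra]. destruct (Rlt_dec x c); [|lra].
      destruct (Hd x ltac:(lra)) as [l [Hl Hl0]].
      apply is_derive_Reals in Hl. rewrite (is_derive_unique _ _ _ Hl). exact Hl0. }
    assert (0 <= df x * (c - a)) by (apply Rmult_le_pos; lra). lra.
Qed.

Lemma partition_mono (f : R -> R) (n : nat) (t : nat -> R) :
  (forall i, (i < n)%nat -> t i < t (S i)) ->
  (forall i, (i < n)%nat -> f (t i) <= f (t (S i))) ->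
  f (t O) <= f (t n).
Proof.
  intros _ H. induction n. lra.
  apply Rle_trans with (f (t n)). apply IHn. intros; apply H; lia. apply H; lia.
Qed.

Lemma partition_ge (n : nat) (t : nat -> R) :
  (forall i, (i < n)%nat -> t i < t (S i)) ->
  forall i, (i <= n)%nat -> t O <= t i.
Proof.
  intros H i. induction i; intros Hi. lra.
  apply Rle_trans with (t i). apply IHi; lia. left; apply H; lia.
Qed.

Lemma sol_mono (ul uh : R) (u : R -> R) (F : R -> R) :
  admissible ul uh u ->
  (forall t, 0 <= t -> continuity_pt F t) ->
  (forall t, 0 < t -> locally_const u t -> exists l, derivable_pt_lim F t l /\ 0 <= l) ->
  forall T, 0 <= T -> F 0 <= F T.
Proof.
  intros [_ Hpc] Hc Hd T HT.
  destruct (Rle_lt_or_eq_dec 0 T HT) as [HT'|HT']; [|subst; lra].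
  destruct (Hpc 0 T HT') as [n [t [H0 [Hn [Hinc Hcst]]]]].
  rewrite <- H0, <- Hn. apply partition_mono; auto.
  intros i Hi.
  assert (Hge : 0 <= t i) by (rewrite <- H0; apply partition_ge with n; auto; lia).
  apply piece_mono. apply Hinc; auto.
  - intros s Hs. apply Hc. lra.
  - intros s Hs. destruct (Hcst i Hi) as [v Hv]. apply Hd. lra.
    exists (Rmin (s - t i) (t (S i) - s)). split.
    + apply Rmin_glb_lt; lra.
    + intros s' Hs'. rewrite (Hv s) by lra. apply Hv.
      assert (Rmin (s - t i) (t (S i) - s) <= s - t i) by apply Rmin_l.
      assert (Rmin (s - t i) (t (S i) - s) <= t (S i) - s) by apply Rmin_r.
      apply Rabs_def2 in Hs'. lra.
Qed.

Lemma dmult f g x lf lg : derivable_pt_lim f x lf -> derivable_pt_lim g x lg ->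
  derivable_pt_lim (fun s => f s * g s) x (lf * g x + f x * lg).
Proof. intros. apply (derivable_pt_lim_mult f g); auto. Qed.
Lemma dplus f g x lf lg : derivable_pt_lim f x lf -> derivable_pt_lim g x lg ->
  derivable_pt_lim (fun s => f s + g s) x (lf + lg).
Proof. intros. apply (derivable_pt_lim_plus f g); auto. Qed.
Lemma dscal c f x lf : derivable_pt_lim f x lf ->
  derivable_pt_lim (fun s => c * f s) x (c * lf).
Proof. intros. apply (derivable_pt_lim_scal f); auto. Qed.
Lemma dexpl k x : derivable_pt_lim (fun s => exp (k * s)) x (k * exp (k * x)).
Proof. apply is_derive_Reals. auto_derive; auto. ring. Qed.
Lemma cmult f g x : continuity_pt f x -> continuity_pt g x -> continuity_pt (fun s => f s * g s) x.
Proof. intros. apply (continuity_pt_mult f g); auto. Qed.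
Lemma cplus f g x : continuity_pt f x -> continuity_pt g x -> continuity_pt (fun s => f s + g s) x.
Proof. intros. apply (continuity_pt_plus f g); auto. Qed.
Lemma cconst c x : continuity_pt (fun _ => c) x.
Proof. apply continuity_pt_const. intros a b; auto. Qed.
Lemma cexpl k x : continuity_pt (fun s => exp (k * s)) x.
Proof. apply derivable_continuous_pt. exists (k * exp (k*x)). apply dexpl. Qed.
Lemma cscal c f x : continuity_pt f x -> continuity_pt (fun s => c * f s) x.
Proof. intros. apply cmult; auto. apply cconst. Qed.

Lemma abs_u_bound ul uh v : ul <= v <= uh -> Rabs v <= Rabs ul + Rabs uh.
Proof.
  intros H. unfold Rabs. repeat destruct Rcase_abs; lra.
Qed.

Lemma x_pos alpha b ul uh u p phi :
  admissible ul uh u -> is_solution alpha b u p phi -> 0 < fst p ->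
  forall t, 0 <= t -> 0 < fst (phi t).
Proof.
  intros Hadm Hsol Hp.
  destruct Hsol as [H0 [Hc Hd]].
  set (X := fun s => fst (phi s)).
  set (c := 2 * Rabs alpha * (Rabs ul + Rabs uh)).
  set (F := fun s => X s * X s * exp (c * s)).
  assert (Hmono : forall t, 0 <= t -> F 0 <= F t).
  { apply (sol_mono ul uh u F Hadm).
    - intros t Ht. unfold F. apply cmult. apply cmult; apply Hc; auto. apply cexpl.
    - intros t Ht Hl. destruct (Hd t Ht Hl) as [HX _].
      eexists. split. unfold F.
      apply dmult. apply dmult; exact HX. apply dexpl.
      assert (Hu : Rabs (u t) <= Rabs ul + Rabs uh) by (apply abs_u_bound; apply Hadm).
      assert (Hua : - (Rabs (u t) * Rabs alpha) <= u t * alpha).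
      { rewrite <- Rabs_mult. pose proof (Rle_abs (- (u t * alpha))). rewrite Rabs_Ropp in H. lra. }
      assert (Hcu : 0 <= 2 * (u t * alpha) + c).
      { unfold c. pose proof (Rabs_pos alpha).
        assert (Rabs (u t) * Rabs alpha <= (Rabs ul + Rabs uh) * Rabs alpha)
          by (apply Rmult_le_compat_r; lra). lra. }
      cbv beta. change (fst (phi t)) with (X t).
      replace (u t * alpha * X t * X t + X t * (u t * alpha * X t)) with (2 * (u t * alpha) * (X t * X t)) by ring.
      replace (2 * (u t * alpha) * (X t * X t) * exp (c * t) + X t * X t * (c * exp (c * t)))
        with ((X t * X t * exp (c * t)) * (2 * (u t * alpha) + c)) by ring.
      apply Rmult_le_pos; [apply Rmult_le_pos; [apply Rle_0_sqr | left; apply exp_pos] | exact Hcu]. }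
  assert (Hne : forall t, 0 <= t -> X t <> 0).
  { intros t Ht HX. specialize (Hmono t Ht). unfold F in Hmono. rewrite HX in Hmono.
    unfold X in Hmono. rewrite H0, Rmult_0_r, exp_0 in Hmono.
    assert (0 < fst p * fst p) by (apply Rmult_lt_0_compat; lra). nra. }
  intros t Ht. fold X.
  destruct (Rlt_or_le 0 (X t)) as [Hx|Hx]; auto. exfalso.
  destruct (Rle_lt_or_eq_dec 0 t Ht) as [Ht'|Ht'].
  2:{ subst t. unfold X in Hx. rewrite H0 in Hx. lra. }
  destruct Hx as [Hx|Hx]; [|apply (Hne t Ht Hx)].
  destruct (Ranalysis5.IVT_interv (fun s => - X s) 0 t) as [z [Hz Hz0]].
  - intros a Ha. apply continuity_pt_opp. apply Hc. lra.
  - exact Ht'.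
  - unfold X. rewrite H0. lra.
  - lra.
  - apply (Hne z ltac:(lra)). lra.
Qed.

Lemma dminus f g x lf lg : derivable_pt_lim f x lf -> derivable_pt_lim g x lg ->
  derivable_pt_lim (fun s => f s - g s) x (lf - lg).
Proof. intros. apply (derivable_pt_lim_minus f g); auto. Qed.
Lemma cminus f g x : continuity_pt f x -> continuity_pt g x -> continuity_pt (fun s => f s - g s) x.
Proof. intros. apply (continuity_pt_minus f g); auto. Qed.

Definition Kf (alpha b k : R) (p : pt) := k * (fst p - alpha * snd p) + b * snd p.

Lemma dval f x l l' : derivable_pt_lim f x l -> l = l' -> derivable_pt_lim f x l'.
Proof. intros H ->; exact H. Qed.

Lemma K_deriv alpha b k u p phi t :
  is_solution alpha b u p phi -> 0 < t -> locally_const u t ->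
  derivable_pt_lim (fun s => Kf alpha b k (phi s) * exp ((- b) * s)) t
    (exp ((-b) * t) * (b * fst (phi t) * (u t - k))).
Proof.
  intros [_ [_ Hd]] Ht Hl. destruct (Hd t Ht Hl) as [HX HY].
  unfold Kf. eapply dval.
  apply dmult. apply dplus. apply dscal. apply dminus. exact HX. apply dscal. exact HY.
  apply dscal. exact HY. apply dexpl. cbv beta. ring.
Qed.

Lemma K_cont alpha b k u p phi t :
  is_solution alpha b u p phi -> 0 <= t ->
  continuity_pt (fun s => Kf alpha b k (phi s) * exp ((- b) * s)) t.
Proof.
  intros [_ [Hc _]] Ht. destruct (Hc t Ht) as [HX HY]. unfold Kf.
  apply cmult. apply cplus. apply cscal. apply cminus. exact HX. apply cscal. exact HY.
  apply cscal; exact HY. apply cexpl.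
Qed.

Lemma K_up alpha b ul uh u p phi :
  b < 0 -> admissible ul uh u -> is_solution alpha b u p phi -> 0 < fst p ->
  forall T, 0 <= T -> Kf alpha b uh p * exp (b * T) <= Kf alpha b uh (phi T).
Proof.
  intros Hb Hadm Hsol Hp T HT.
  pose proof (sol_mono ul uh u _ Hadm (fun t Ht => K_cont alpha b uh u p phi t Hsol Ht)) as Hm.
  assert (Hder : forall t, 0 < t -> locally_const u t -> exists l,
     derivable_pt_lim (fun s => Kf alpha b uh (phi s) * exp ((- b) * s)) t l /\ 0 <= l).
  { intros t Ht Hl; eexists; split;
     [apply (K_deriv alpha b uh u p phi t Hsol Ht Hl)|].
    apply Rmult_le_pos. left; apply exp_pos.
    assert (0 < fst (phi t)) by (apply (x_pos alpha b ul uh u p phi); auto; lra).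
    assert (u t <= uh) by apply Hadm.
    replace (b * fst (phi t) * (u t - uh)) with ((-b) * fst (phi t) * (uh - u t)) by ring.
    apply Rmult_le_pos; [apply Rmult_le_pos|]; lra. }
  assert (H := Hm Hder T HT).
  { destruct Hsol as [H0 _]. cbv beta in H. rewrite H0, Rmult_0_r, exp_0, Rmult_1_r in H.
    apply Rmult_le_compat_r with (r := exp (b * T)) in H; [|left; apply exp_pos].
    rewrite Rmult_assoc, <- exp_plus in H. replace (- b * T + b * T) with 0 in H by ring.
    rewrite exp_0, Rmult_1_r in H. exact H. }
Qed.

Lemma K_down alpha b ul uh u p phi :
  b < 0 -> admissible ul uh u -> is_solution alpha b u p phi -> 0 < fst p ->
  forall T, 0 <= T -> Kf alpha b ul (phi T) <= Kf alpha b ul p * exp (b * T).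
Proof.
  intros Hb Hadm Hsol Hp T HT.
  pose proof (sol_mono ul uh u (fun s => - (Kf alpha b ul (phi s) * exp ((- b) * s))) Hadm
     (fun t Ht => continuity_pt_opp _ _ (K_cont alpha b ul u p phi t Hsol Ht))) as Hm.
  assert (Hder : forall t, 0 < t -> locally_const u t -> exists l,
     derivable_pt_lim (fun s => - (Kf alpha b ul (phi s) * exp ((- b) * s))) t l /\ 0 <= l).
  { intros t Ht Hl; eexists; split;
     [apply (derivable_pt_lim_opp _ _ _ (K_deriv alpha b ul u p phi t Hsol Ht Hl))|].
    assert (0 < fst (phi t)) by (apply (x_pos alpha b ul uh u p phi); auto; lra).
    assert (ul <= u t) by apply Hadm.
    replace (- (exp (- b * t) * (b * fst (phi t) * (u t - ul)))) with
      (exp (- b * t) * ((-b) * fst (phi t) * (u t - ul))) by ring.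
    apply Rmult_le_pos. left; apply exp_pos.
    apply Rmult_le_pos; [apply Rmult_le_pos|]; lra. }
  assert (H := Hm Hder T HT).
  { destruct Hsol as [H0 _]. cbv beta in H. rewrite H0, Rmult_0_r, exp_0, Rmult_1_r in H.
    apply Ropp_le_cancel in H.
    apply Rmult_le_compat_r with (r := exp (b * T)) in H; [|left; apply exp_pos].
    rewrite Rmult_assoc, <- exp_plus in H. replace (- b * T + b * T) with 0 in H by ring.
    rewrite exp_0, Rmult_1_r in H. exact H.
}
Qed.

Definition inCK alpha b ul uh (p : pt) :=
  0 < fst p /\ Kf alpha b ul p <= 0 /\ 0 <= Kf alpha b uh p.

Lemma Cset_iff alpha b ul uh p : b < 0 -> ul < uh ->
  Cset alpha b ul uh p <-> inCK alpha b ul uh p.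
Proof.
  intros Hb Hlu. destruct p as [x y]. unfold Cset, inCK, inB, r_u, inG, Kf, m_u; simpl.
  split.
  - intros [u [[Hu Hd] [Hx Hy]]].
    assert (E : forall k, k * (x - alpha * y) + b * y = b * x * (u - k) / (u * alpha - b)).
    { intros k. rewrite Hy. field. lra. }
    split; auto. rewrite !E. split.
    + unfold Rdiv. apply Rmult_le_0_r; [|left; apply Rinv_0_lt_compat; lra].
      replace (b * x * (u - ul)) with (- ((-b) * x * (u - ul))) by ring.
      assert (0 <= (-b) * x * (u - ul)) by (apply Rmult_le_pos; [apply Rmult_le_pos|]; lra). lra.
    + unfold Rdiv. apply Rmult_le_pos; [|left; apply Rinv_0_lt_compat; lra].
      replace (b * x * (u - uh)) with ((-b) * x * (uh - u)) by ring.
      apply Rmult_le_pos; [apply Rmult_le_pos|]; lra.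
  - intros [Hx [HL HH]].
    set (z := x - alpha * y) in *.
    assert (Hz0 : 0 <= z).
    { assert (0 <= (uh - ul) * z) by lra.
      destruct (Rle_or_lt 0 z); auto.
      assert ((uh - ul) * z < 0) by (apply Rmult_pos_neg; lra). lra. }
    assert (Hz : 0 < z).
    { destruct Hz0 as [|Hz0]; auto. exfalso. rewrite <- Hz0 in HL, HH.
      assert (y = 0). { assert (b * y = 0) by lra. apply Rmult_integral in H. lra. }
      unfold z in Hz0. subst y. lra. }
    set (u := - b * y / z).
    assert (Hu : u * z = - b * y) by (unfold u; field; lra).
    exists u. split; [split; [split|] |split; auto].
    + apply Rmult_le_reg_r with z; auto. lra.
    + apply Rmult_le_reg_r with z; auto. lra.
    + apply Rmult_lt_reg_r with z; auto. rewrite Rmult_0_l.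
      replace ((u * alpha - b) * z) with (alpha * (u * z) - b * z) by ring.
      rewrite Hu. unfold z. nra.
    + assert (Hd : (u * alpha - b) * z = - b * x).
      { replace ((u * alpha - b) * z) with (alpha * (u * z) - b * z) by ring.
        rewrite Hu. unfold z. ring. }
      assert (Hd' : u * alpha - b <> 0).
      { intro E. rewrite E, Rmult_0_l in Hd. nra. }
      assert (y * (u * alpha - b) = u * x).
      { apply Rmult_eq_reg_r with z; [|lra].
        replace (y * (u * alpha - b) * z) with (y * ((u * alpha - b) * z)) by ring.
        rewrite Hd. replace (u * x * z) with ((u * z) * x) by ring. rewrite Hu. ring. }
      field_simplify; auto. rewrite <- H. field. auto.
Qed.

Lemma exp_le_mono x y : x <= y -> exp x <= exp y.
Proof. intros [H|H]; [left; apply exp_increasing; auto | subst; lra]. Qed.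

Lemma close_ge (S : pt -> Prop) (a d c : R) q :
  (forall s, S s -> c <= a * fst s + d * snd s) -> closureG S q ->
  c <= a * fst q + d * snd q.
Proof.
  intros HS [_ Hcl].
  destruct (Rle_or_lt c (a * fst q + d * snd q)) as [|Hlt]; auto. exfalso.
  set (M := Rabs a + Rabs d + 1).
  assert (HM : 0 < M) by (unfold M; pose proof (Rabs_pos a); pose proof (Rabs_pos d); lra).
  set (g := c - (a * fst q + d * snd q)).
  destruct (Hcl (g / M)) as [s [Hs [H1 H2]]].
  { unfold g. apply Rdiv_lt_0_compat; lra. }
  specialize (HS s Hs).
  assert (E : a * fst s + d * snd s - (a * fst q + d * snd q) =
     a * (fst s - fst q) + d * (snd s - snd q)) by ring.
  assert (B1 : Rabs (a * (fst s - fst q)) <= Rabs a * (g / M)).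
  { rewrite Rabs_mult. apply Rmult_le_compat_l. apply Rabs_pos. lra. }
  assert (B2 : Rabs (d * (snd s - snd q)) <= Rabs d * (g / M)).
  { rewrite Rabs_mult. apply Rmult_le_compat_l. apply Rabs_pos. lra. }
  pose proof (Rabs_triang (a * (fst s - fst q)) (d * (snd s - snd q))).
  rewrite <- E in H.
  assert (Rabs a * (g / M) + Rabs d * (g / M) < g).
  { replace (Rabs a * (g / M) + Rabs d * (g / M)) with (g * ((Rabs a + Rabs d) / M)) by (field; lra).
    assert (0 < g) by (unfold g; lra).
    assert ((Rabs a + Rabs d) / M < 1).
    { apply Rmult_lt_reg_r with M; auto. unfold Rdiv. rewrite Rmult_assoc, Rinv_l; [|lra].
      unfold M; lra. }
    nra. }
  pose proof (Rle_abs (a * fst s + d * snd s - (a * fst q + d * snd q))).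
  unfold g in *. lra.
Qed.

Lemma Kf_lin alpha b k p : Kf alpha b k p = k * fst p + (b - k * alpha) * snd p.
Proof. unfold Kf. ring. Qed.

Lemma close_Kf_ge (S : pt -> Prop) alpha b k c q :
  (forall s, S s -> c <= Kf alpha b k s) -> closureG S q -> c <= Kf alpha b k q.
Proof.
  intros HS Hq. rewrite Kf_lin. apply (close_ge S); auto.
  intros s Hs. rewrite <- Kf_lin. auto.
Qed.

Lemma close_Kf_le (S : pt -> Prop) alpha b k c q :
  (forall s, S s -> Kf alpha b k s <= c) -> closureG S q -> Kf alpha b k q <= c.
Proof.
  intros HS Hq.
  assert (- c <= (- k) * fst q + (- (b - k * alpha)) * snd q).
  { apply (close_ge S); auto. intros s Hs. specialize (HS s Hs). rewrite Kf_lin in HS. lra. }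
  rewrite Kf_lin. lra.
Qed.

Lemma orbit_inCK alpha b ul uh p q : b < 0 ->
  inCK alpha b ul uh p -> orbit_plus alpha b ul uh p q -> inCK alpha b ul uh q.
Proof.
  intros Hb [Hx [HL HH]] [u [phi [T [Hadm [Hsol [HT Hq]]]]]]. subst q.
  pose proof (K_up alpha b ul uh u p phi Hb Hadm Hsol Hx T HT).
  pose proof (K_down alpha b ul uh u p phi Hb Hadm Hsol Hx T HT).
  pose proof (exp_pos (b * T)).
  split; [|split].
  - apply (x_pos alpha b ul uh u p phi); auto.
  - nra.
  - nra.
Qed.

Lemma closure_inCK alpha b ul uh (S : pt -> Prop) q :
  (forall s, S s -> inCK alpha b ul uh s) -> closureG S q -> inCK alpha b ul uh q.
Proof.
  intros HS Hq. split; [|split].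
  - destruct Hq as [Hq _]. exact Hq.
  - apply (close_Kf_le S); auto. intros s Hs; apply HS; auto.
  - apply (close_Kf_ge S); auto. intros s Hs; apply HS; auto.
Qed.

Section Flow.
Variables alpha b : R.

Definition fxs (u x0 t : R) := x0 * exp (u * alpha * t).
Definition fys (u x0 y0 t : R) :=
  m_u alpha b u * x0 * exp (u * alpha * t) + (y0 - m_u alpha b u * x0) * exp (b * t).

Lemma fx_deriv u x0 c t :
  derivable_pt_lim (fun s => fxs u x0 (s - c)) t (u * alpha * fxs u x0 (t - c)).
Proof. apply is_derive_Reals. unfold fxs. auto_derive; auto. unfold Rminus. ring. Qed.

Lemma fy_deriv u x0 y0 c t : u * alpha - b <> 0 ->
  derivable_pt_lim (fun s => fys u x0 y0 (s - c)) t
    (b * fys u x0 y0 (t - c) + u * fxs u x0 (t - c)).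
Proof. intros H. apply is_derive_Reals. unfold fys, fxs, m_u. auto_derive; auto. unfold Rminus. field; auto. Qed.

Lemma semi_x u x0 t1 t2 : fxs u (fxs u x0 t1) t2 = fxs u x0 (t1 + t2).
Proof.
  unfold fxs. replace (u * alpha * (t1 + t2)) with (u * alpha * t1 + u * alpha * t2) by ring.
  rewrite exp_plus. ring.
Qed.

Lemma semi_y u x0 y0 t1 t2 : fys u (fxs u x0 t1) (fys u x0 y0 t1) t2 = fys u x0 y0 (t1 + t2).
Proof.
  unfold fys, fxs. replace (u * alpha * (t1 + t2)) with (u * alpha * t1 + u * alpha * t2) by ring.
  replace (b * (t1 + t2)) with (b * t1 + b * t2) by ring.
  rewrite !exp_plus. ring.
Qed.

Lemma fx0 u x0 : fxs u x0 0 = x0.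
Proof. unfold fxs. rewrite Rmult_0_r, exp_0. ring. Qed.
Lemma fy0 u x0 y0 : fys u x0 y0 0 = y0.
Proof. unfold fys. rewrite !Rmult_0_r, exp_0. ring. Qed.

Variables (xp yp w v tau : R).

Definition t1f s := (s + tau - Rabs (s - tau)) / 2.
Definition t2f s := (s - tau + Rabs (s - tau)) / 2.
Definition PX s := fxs v (fxs w xp (t1f s)) (t2f s).
Definition PY s := fys v (fxs w xp (t1f s)) (fys w xp yp (t1f s)) (t2f s).
Definition traj s : pt := (PX s, PY s).
Definition ctrl s := if Rlt_dec s tau then w else v.

Lemma t_left s : s <= tau -> t1f s = s /\ t2f s = 0.
Proof. intros H. unfold t1f, t2f. rewrite Rabs_left1 by lra. split; field. Qed.
Lemma t_right s : tau <= s -> t1f s = tau /\ t2f s = s - tau.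
Proof. intros H. unfold t1f, t2f. rewrite Rabs_right by lra. split; field. Qed.

Lemma PX_left s : s <= tau -> PX s = fxs w xp s.
Proof. intros H. unfold PX. destruct (t_left s H) as [-> ->]. apply fx0. Qed.
Lemma PY_left s : s <= tau -> PY s = fys w xp yp s.
Proof. intros H. unfold PY. destruct (t_left s H) as [-> ->]. apply fy0. Qed.
Lemma PX_right s : tau <= s -> PX s = fxs v (fxs w xp tau) (s - tau).
Proof. intros H. unfold PX. destruct (t_right s H) as [-> ->]. auto. Qed.
Lemma PY_right s : tau <= s -> PY s = fys v (fxs w xp tau) (fys w xp yp tau) (s - tau).
Proof. intros H. unfold PY. destruct (t_right s H) as [-> ->]. auto. Qed.

Lemma ct1 s : continuity_pt t1f s.
Proof.
  unfold t1f. apply continuity_pt_mult with (f2 := fun _ => / 2). 2: apply cconst.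
  apply cminus. apply cplus. apply continuity_pt_id. apply cconst.
  apply continuity_pt_comp with (f1 := fun z => z - tau) (f2 := Rabs).
  apply cminus. apply continuity_pt_id. apply cconst. apply Rcontinuity_abs.
Qed.
Lemma ct2 s : continuity_pt t2f s.
Proof.
  unfold t2f. apply continuity_pt_mult with (f2 := fun _ => / 2). 2: apply cconst.
  apply cplus. apply cminus. apply continuity_pt_id. apply cconst.
  apply continuity_pt_comp with (f1 := fun z => z - tau) (f2 := Rabs).
  apply cminus. apply continuity_pt_id. apply cconst. apply Rcontinuity_abs.
Qed.
Lemma cexpc k f s : continuity_pt f s -> continuity_pt (fun z => exp (k * f z)) s.
Proof. intros H. apply continuity_pt_comp with (f1 := f) (f2 := fun z => exp (k * z)); auto. apply cexpl. Qed.

Lemma cPX s : continuity_pt PX s.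
Proof.
  unfold PX, fxs. apply cmult. apply cmult. apply cconst. apply cexpc, ct1. apply cexpc, ct2.
Qed.
Lemma copp f x : continuity_pt f x -> continuity_pt (fun s => - f s) x.
Proof. intros; apply (continuity_pt_opp f); auto. Qed.

Lemma cPY s : continuity_pt PY s.
Proof.
  unfold PY, fys, fxs.
  repeat first [ apply ct1 | apply ct2 | apply cexpc | apply cplus | apply cminus | apply cmult | apply copp | apply cconst ].
Qed.

Lemma ctrl_adm ul uh : ul <= w <= uh -> ul <= v <= uh -> admissible ul uh ctrl.
Proof.
  intros Hw Hv. split.
  - intros t. unfold ctrl. destruct (Rlt_dec t tau); auto.
  - intros a c Hac.
    destruct (Rlt_dec a tau) as [H1|H1]; [destruct (Rlt_dec tau c) as [H2|H2]|].
    + exists 2%nat, (fun i => match i with O => a | S O => tau | _ => c end).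
      split; [auto|split; [auto|split]].
      * intros i Hi. destruct i as [|[|i]]; try lra; lia.
      * intros i Hi. destruct i as [|[|i]].
        -- exists w. intros s Hs. unfold ctrl. destruct (Rlt_dec s tau); auto; lra.
        -- exists v. intros s Hs. unfold ctrl. destruct (Rlt_dec s tau); auto; lra.
        -- lia.
    + exists 1%nat, (fun i => match i with O => a | _ => c end).
      split; [auto|split; [auto|split]].
      * intros i Hi. destruct i as [|i]; [lra|lia].
      * intros i Hi. destruct i as [|i]; [|lia].
        exists w. intros s Hs. unfold ctrl. destruct (Rlt_dec s tau); auto; lra.
    + exists 1%nat, (fun i => match i with O => a | _ => c end).
      split; [auto|split; [auto|split]].
      * intros i Hi. destruct i as [|i]; [lra|lia].
      * intros i Hi. destruct i as [|i]; [|lia].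
        exists v. intros s Hs. unfold ctrl. destruct (Rlt_dec s tau); auto; lra.
Qed.

Lemma traj_sol : w * alpha - b <> 0 -> v * alpha - b <> 0 -> 0 <= tau ->
  is_solution alpha b ctrl (xp, yp) traj.
Proof.
  intros Hdw Hdv Htau. split; [|split].
  - unfold traj. rewrite PX_left, PY_left by lra. rewrite fx0, fy0. auto.
  - intros t _. split; [exact (cPX t) | exact (cPY t)].
  - intros t Ht Hl. unfold traj; simpl.
    destruct (Rtotal_order t tau) as [Hlt|[Heq|Hgt]].
    + assert (Hc : ctrl t = w) by (unfold ctrl; destruct (Rlt_dec t tau); auto; lra).
      rewrite Hc. split.
      * apply derivable_pt_lim_locally_ext with (f := fun s => fxs w xp (s - 0)) (a := t - 1) (b := tau).
        lra. intros z Hz. rewrite PX_left by lra. rewrite Rminus_0_r. auto.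
        eapply dval. apply fx_deriv. rewrite PX_left by lra. rewrite Rminus_0_r. auto.
      * apply derivable_pt_lim_locally_ext with (f := fun s => fys w xp yp (s - 0)) (a := t - 1) (b := tau).
        lra. intros z Hz. rewrite PY_left by lra. rewrite Rminus_0_r. auto.
        eapply dval. apply fy_deriv; auto. rewrite PX_left, PY_left by lra. rewrite !Rminus_0_r. auto.
    + subst t. destruct Hl as [d [Hd Hcd]].
      assert (Hwv : w = v).
      { assert (E := Hcd (tau - d / 2)). rewrite Rabs_left in E by lra.
        specialize (E ltac:(lra)). unfold ctrl in E.
        destruct (Rlt_dec (tau - d/2) tau); [|lra]. destruct (Rlt_dec tau tau); [lra|]. auto. }
      assert (Ex : forall z, PX z = fxs w xp (z - 0)).
      { intros z. rewrite Rminus_0_r. destruct (Rle_or_lt z tau).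
        apply PX_left; auto. rewrite PX_right by lra. rewrite <- Hwv, semi_x. f_equal. ring. }
      assert (Ey : forall z, PY z = fys w xp yp (z - 0)).
      { intros z. rewrite Rminus_0_r. destruct (Rle_or_lt z tau).
        apply PY_left; auto. rewrite PY_right by lra. rewrite <- Hwv, semi_y. f_equal. ring. }
      assert (Hc : ctrl tau = w) by (unfold ctrl; destruct (Rlt_dec tau tau); auto).
      rewrite Hc. split.
      * apply derivable_pt_lim_ext with (f := fun s => fxs w xp (s - 0)).
        intros z; rewrite Ex; auto.
        eapply dval. apply fx_deriv. rewrite Ex. auto.
      * apply derivable_pt_lim_ext with (f := fun s => fys w xp yp (s - 0)).
        intros z; rewrite Ey; auto.
        eapply dval. apply fy_deriv; auto. rewrite Ex, Ey. auto.
    + assert (Hc : ctrl t = v) by (unfold ctrl; destruct (Rlt_dec t tau); auto; lra).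
      rewrite Hc. split.
      * apply derivable_pt_lim_locally_ext with (f := fun s => fxs v (fxs w xp tau) (s - tau)) (a := tau) (b := t + 1).
        lra. intros z Hz. rewrite PX_right by lra. auto.
        eapply dval. apply fx_deriv. rewrite PX_right by lra. auto.
      * apply derivable_pt_lim_locally_ext with (f := fun s => fys v (fxs w xp tau) (fys w xp yp tau) (s - tau)) (a := tau) (b := t + 1).
        lra. intros z Hz. rewrite PY_right by lra. auto.
        eapply dval. apply fy_deriv; auto. rewrite PX_right, PY_right by lra. auto.
Qed.

Lemma traj_end T : 0 <= T ->
  traj (tau + T) = (fxs v (fxs w xp tau) T, fys v (fxs w xp tau) (fys w xp yp tau) T).
Proof.
  intros HT. unfold traj. rewrite PX_right, PY_right by lra.
  replace (tau + T - tau) with T by ring. auto.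
Qed.

End Flow.

Lemma cond_i alpha b ul uh p : Cset alpha b ul uh p ->
  exists u phi, admissible ul uh u /\ is_solution alpha b u p phi /\
    forall t, 0 <= t -> Cset alpha b ul uh (phi t).
Proof.
  intros [u [[Hu Hd] [Hx Hy]]]. destruct p as [xp yp]. simpl in *.
  exists (ctrl u u 0), (traj alpha b xp yp u u 0). split; [|split].
  - apply ctrl_adm; auto.
  - apply traj_sol; lra.
  - intros t Ht. replace t with (0 + t) by ring. rewrite traj_end by auto.
    rewrite fx0, fy0. exists u. split. split; auto.
    split; simpl; unfold fxs, fys.
    + apply Rmult_lt_0_compat; auto; apply exp_pos.
    + rewrite Hy. ring.
Qed.

Lemma w_ok alpha b ul uh k u : 0 < k -> k * (2 * Rabs alpha * (uh - ul)) <= - b ->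
  ul <= u <= uh -> ul < 0 -> 0 < uh -> b < 0 -> b < k * u * alpha.
Proof.
  intros Hk Hkb Hu Hul Huh Hb.
  assert (Hau : Rabs u <= uh - ul) by (unfold Rabs; destruct Rcase_abs; lra).
  pose proof (Rabs_pos alpha).
  assert (E : Rabs (k * u * alpha) = k * Rabs u * Rabs alpha)
    by (rewrite !Rabs_mult, (Rabs_right k) by lra; ring).
  pose proof (Rle_abs (- (k * u * alpha))). rewrite Rabs_Ropp, E in H0.
  assert (k * Rabs u * Rabs alpha <= k * (uh - ul) * Rabs alpha).
  { apply Rmult_le_compat_r; auto. apply Rmult_le_compat_l; lra. }
  lra.
Qed.

Lemma abs4 a b c d : Rabs (a + b + c + d) <= Rabs a + Rabs b + Rabs c + Rabs d.
Proof.
  pose proof (Rabs_triang (a + b + c) d). pose proof (Rabs_triang (a + b) c).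
  pose proof (Rabs_triang a b). lra.
Qed.

Lemma reach alpha b ul uh xp yp q : alpha <> 0 -> b < 0 -> ul < 0 -> 0 < uh -> 0 < xp ->
  Cset alpha b ul uh q -> closureG (orbit_plus alpha b ul uh (xp, yp)) q.
Proof.
  intros Ha Hb Hul Huh Hxp [v [[Hv Hvb] [Hxq Hyq]]].
  destruct q as [xq yq]; unfold inG in *; simpl in *.
  split; [exact Hxq|]. intros eps Heps.
  set (kap := Rmin 1 ((-b) / (2 * Rabs alpha * (uh - ul)))).
  assert (Hden : 0 < 2 * Rabs alpha * (uh - ul)).
  { pose proof (Rabs_pos_lt alpha Ha). apply Rmult_lt_0_compat; lra. }
  assert (Hk0 : 0 < kap).
  { apply Rmin_glb_lt. lra. apply Rdiv_lt_0_compat; lra. }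
  assert (Hk1 : kap <= 1) by apply Rmin_l.
  assert (Hk2 : kap * (2 * Rabs alpha * (uh - ul)) <= - b).
  { assert (kap <= (-b) / (2 * Rabs alpha * (uh - ul))) by apply Rmin_r.
    apply Rmult_le_compat_r with (r := 2 * Rabs alpha * (uh - ul)) in H; [|lra].
    replace ((-b) / (2 * Rabs alpha * (uh - ul)) * (2 * Rabs alpha * (uh - ul))) with (-b) in H
      by (field; split; [lra | apply Rgt_not_eq, Rabs_pos_lt; exact Ha]). exact H. }
  set (wP := kap * uh). set (wN := kap * ul).
  set (Mw := Rabs (m_u alpha b wP) + Rabs (m_u alpha b wN)).
  set (mv := m_u alpha b v).
  set (K := Mw + Rabs mv). set (C0 := Rabs yp + Mw * xp).
  assert (HMw : 0 <= Mw) by (unfold Mw; pose proof (Rabs_pos (m_u alpha b wP)); pose proof (Rabs_pos (m_u alpha b wN)); lra).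
  assert (HK : 0 <= K) by (unfold K; pose proof (Rabs_pos mv); lra).
  assert (HC0 : 0 <= C0) by (unfold C0; pose proof (Rabs_pos yp); nra).
  set (A := K * xq + C0 + 1).
  assert (HA : 0 < A) by (unfold A; nra).
  set (c := Rmin (v * alpha - b) (-b)).
  assert (Hc : 0 < c) by (apply Rmin_glb_lt; lra).
  set (T := Rmax 0 (ln (A / eps) / c)).
  assert (HT0 : 0 <= T) by apply Rmax_l.
  assert (HT1 : ln (A / eps) / c <= T) by apply Rmax_r.
  set (x1 := xq * exp (- (v * alpha) * T)).
  assert (Hx1 : 0 < x1) by (unfold x1; apply Rmult_lt_0_compat; auto; apply exp_pos).
  set (g := ln x1 - ln xp).
  assert (Hw : exists w, (ul <= w <= uh) /\ b < w * alpha /\ 0 <= g * (w * alpha) /\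
                         Rabs (m_u alpha b w) <= Mw /\ w * alpha <> 0).
  { destruct (Rle_dec 0 (g * alpha)) as [Hg|Hg].
    - exists wP. split; [|split; [|split; [|split]]].
      + unfold wP. split; nra.
      + unfold wP. rewrite Rmult_assoc. rewrite <- Rmult_assoc. apply (w_ok alpha b ul uh); auto; lra.
      + unfold wP. replace (g * (kap * uh * alpha)) with ((kap * uh) * (g * alpha)) by ring.
        apply Rmult_le_pos; auto. nra.
      + unfold Mw. pose proof (Rabs_pos (m_u alpha b wN)). lra.
      + unfold wP. apply Rmult_integral_contrapositive; split; auto. nra.
    - exists wN. split; [|split; [|split; [|split]]].
      + unfold wN. split; nra.
      + unfold wN. apply (w_ok alpha b ul uh); auto; lra.
      + unfold wN. replace (g * (kap * ul * alpha)) with (- (kap * ul) * (- (g * alpha))) by ring.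
        apply Rmult_le_pos; nra.
      + unfold Mw. pose proof (Rabs_pos (m_u alpha b wP)). lra.
      + unfold wN. apply Rmult_integral_contrapositive; split; auto. nra. }
  destruct Hw as [w [Hwu [Hwb [Hgw [HmW Hwa]]]]].
  assert (Hw0 : w <> 0) by (intro E; apply Hwa; rewrite E; ring).
  set (tau := g / (w * alpha)).
  assert (Htau : 0 <= tau).
  { destruct (Rle_or_lt 0 tau) as [|Hlt]; auto.
    assert (E : tau * ((w * alpha) * (w * alpha)) = g * (w * alpha)) by (unfold tau; field; split; auto).
    assert (0 < (w * alpha) * (w * alpha)) by (apply Rsqr_pos_lt; auto).
    nra. }
  exists (traj alpha b xp yp w v tau (tau + T)). split.
  { exists (ctrl w v tau), (traj alpha b xp yp w v tau), (tau + T).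
    split; [apply ctrl_adm; auto|split; [apply traj_sol; lra|split; [lra|auto]]]. }
  rewrite traj_end by auto. simpl.
  assert (HX1 : fxs alpha w xp tau = x1).
  { unfold fxs. replace (w * alpha * tau) with (ln x1 + - ln xp) by (unfold tau, g; field; split; auto).
    rewrite exp_plus, exp_Ropp, !exp_ln by auto. field. lra. }
  rewrite HX1.
  assert (Hxe : x1 * exp (v * alpha * T) = xq).
  { unfold x1. rewrite Rmult_assoc, <- exp_plus.
    replace (- (v * alpha) * T + v * alpha * T) with 0 by ring. rewrite exp_0. ring. }
  split.
  { unfold fxs. rewrite Hxe. rewrite Rminus_diag, Rabs_R0. auto. }
  set (Y1 := fys alpha b w xp yp tau).
  assert (EY : fys alpha b v x1 Y1 T - yq = (Y1 - mv * x1) * exp (b * T)).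
  { unfold fys. fold mv. rewrite Hyq. fold mv. rewrite <- Hxe. ring. }
  rewrite EY.
  assert (EY1 : Y1 - mv * x1 = m_u alpha b w * x1 + yp * exp (b * tau)
                   + (- (m_u alpha b w * xp * exp (b * tau))) + (- (mv * x1))).
  { unfold Y1, fys. rewrite <- HX1. unfold fxs. ring. }
  assert (Hetau : exp (b * tau) <= 1).
  { rewrite <- exp_0. apply exp_le_mono. nra. }
  pose proof (exp_pos (b * tau)) as Hetp.
  assert (HB1 : Rabs (Y1 - mv * x1) <= K * x1 + C0).
  { rewrite EY1. eapply Rle_trans. apply abs4.
    rewrite !Rabs_Ropp, !Rabs_mult, (Rabs_right x1), (Rabs_right xp), (Rabs_right (exp (b * tau))) by lra.
    unfold K, C0. pose proof (Rabs_pos yp). pose proof (Rabs_pos mv).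
    pose proof (Rabs_pos (m_u alpha b w)).
    assert (Rabs (m_u alpha b w) * x1 <= Mw * x1) by (apply Rmult_le_compat_r; lra).
    assert (Rabs yp * exp (b * tau) <= Rabs yp * 1) by (apply Rmult_le_compat_l; lra).
    assert (Rabs (m_u alpha b w) * xp * exp (b * tau) <= Mw * xp * 1).
    { apply Rmult_le_compat; try lra. apply Rmult_le_pos; lra. apply Rmult_le_compat_r; lra. }
    lra. }
  rewrite Rabs_mult, (Rabs_right (exp (b * T))) by (left; apply exp_pos).
  assert (HeT : exp (b * T) <= exp (- c * T)).
  { apply exp_le_mono. assert (b <= - c) by (pose proof (Rmin_r (v * alpha - b) (-b)); fold c in H; lra). nra. }
  assert (Hx1e : x1 * exp (b * T) <= xq * exp (- c * T)).
  { unfold x1. rewrite Rmult_assoc, <- exp_plus. apply Rmult_le_compat_l; [lra|].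
    apply exp_le_mono. assert (v * alpha - b >= c) by (pose proof (Rmin_l (v * alpha - b) (-b)); fold c in H; lra). nra. }
  assert (HAe : A * exp (- c * T) <= eps).
  { assert (E1 : exp (- c * T) * (A / eps) <= 1).
    { rewrite <- (exp_ln (A / eps)) by (apply Rdiv_lt_0_compat; lra).
      rewrite <- exp_plus. rewrite <- exp_0. apply exp_le_mono.
      assert (ln (A / eps) <= c * T).
      { apply Rmult_le_compat_l with (r := c) in HT1; [|lra].
        replace (c * (ln (A / eps) / c)) with (ln (A / eps)) in HT1 by (field; lra). lra. }
      lra. }
    apply Rmult_le_compat_r with (r := eps) in E1; [|lra].
    replace (exp (- c * T) * (A / eps) * eps) with (A * exp (- c * T)) in E1 by (field; lra). lra. }
  pose proof (exp_pos (- c * T)). pose proof (exp_pos (b * T)).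
  assert (Rabs (Y1 - mv * x1) * exp (b * T) <= (K * x1 + C0) * exp (b * T))
    by (apply Rmult_le_compat_r; lra).
  assert ((K * x1 + C0) * exp (b * T) <= K * (xq * exp (- c * T)) + C0 * exp (- c * T)).
  { replace ((K * x1 + C0) * exp (b * T)) with (K * (x1 * exp (b * T)) + C0 * exp (b * T)) by ring.
    apply Rplus_le_compat; apply Rmult_le_compat_l; auto. }
  assert (K * (xq * exp (- c * T)) + C0 * exp (- c * T) < A * exp (- c * T)).
  { unfold A. nra. }
  lra.
Qed.

Theorem mainTheorem10 (alpha b ul uh : R)
  (Halpha : alpha <> 0) (Hb : b < 0) (Hul : ul < 0) (Huh : 0 < uh) :
  is_control_set alpha b ul uh (Cset alpha b ul uh) /\
  (forall D, is_control_set alpha b ul uh D ->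
     forall p, D p <-> Cset alpha b ul uh p) /\
  (forall p, Cset alpha b ul uh p ->
     forall q, Cset alpha b ul uh q <-> closureG (orbit_plus alpha b ul uh p) q).
Proof.
  assert (HCK : forall p, Cset alpha b ul uh p <-> inCK alpha b ul uh p)
    by (intros; apply Cset_iff; lra).
  assert (Hconds : control_set_conditions alpha b ul uh (Cset alpha b ul uh)).
  { split; [|split].
    - intros p Hp. apply HCK in Hp. apply Hp.
    - intros p Hp. apply cond_i; auto.
    - intros [xp yp] q Hp Hq. apply reach; auto. apply HCK in Hp. apply Hp. }
  assert (Hclos : forall p q, Cset alpha b ul uh p ->
            closureG (orbit_plus alpha b ul uh p) q -> Cset alpha b ul uh q).
  { intros p q Hp Hq. apply HCK. apply (closure_inCK alpha b ul uh (orbit_plus alpha b ul uh p)); auto.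
    intros s Hs. apply (orbit_inCK alpha b ul uh p); auto. apply HCK; auto. }
  assert (Hc0 : Cset alpha b ul uh (1, 0)).
  { apply HCK. unfold inCK, Kf; simpl. repeat split; nra. }
  assert (Hmax : is_control_set alpha b ul uh (Cset alpha b ul uh)).
  { split; auto. intros D [_ [_ HD]] HCD p Hp.
    apply (Hclos (1, 0)); auto. }
  split; auto. split.
  - intros D [HDc HDmax].
    assert (HCD : (forall p, D p -> Cset alpha b ul uh p) -> forall p, Cset alpha b ul uh p -> D p).
    { intros H. apply HDmax; auto. }
    destruct (classic (exists p, D p)) as [[p0 Hp0]|Hne].
    2:{ exfalso. apply Hne. exists (1, 0). apply HCD; auto.
        intros p Hp. exfalso. apply Hne. exists p. auto. }
    destruct HDc as [HDG [HDi HDii]].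
    assert (Hp0C : Cset alpha b ul uh p0).
    { apply HCK. destruct (classic (inCK alpha b ul uh p0)) as [|Hn]; auto. exfalso.
      assert (Hx0 : 0 < fst p0) by (apply HDG; auto).
      destruct (HDi p0 Hp0) as [u [phi [Hadm [Hsol Hinv]]]].
      set (r := phi 1).
      assert (Hr : D r) by (apply Hinv; lra).
      assert (Hxr : 0 < fst r) by (apply (x_pos alpha b ul uh u p0 phi); auto; lra).
      assert (Hcl := HDii r p0 Hr Hp0).
      assert (Heb : exp (b * 1) < 1) by (apply Rlt_le_trans with (exp 0); [apply exp_increasing; lra | rewrite exp_0; lra]).
      pose proof (exp_pos (b * 1)).
      assert (Hcases : Kf alpha b uh p0 < 0 \/ 0 < Kf alpha b ul p0).
      { unfold inCK in Hn. destruct (Rlt_or_le (Kf alpha b uh p0) 0); auto.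
        destruct (Rlt_or_le 0 (Kf alpha b ul p0)); auto. exfalso; apply Hn; auto. }
      destruct Hcases as [HH|HL].
      - pose proof (K_up alpha b ul uh u p0 phi Hb Hadm Hsol Hx0 1 ltac:(lra)) as Hr1.
        fold r in Hr1.
        assert (Kf alpha b uh p0 * exp (b * 1) <= Kf alpha b uh p0).
        { apply (close_Kf_ge (orbit_plus alpha b ul uh r)); auto.
          intros s [u' [phi' [T [Hadm' [Hsol' [HT Hs]]]]]]. subst s.
          pose proof (K_up alpha b ul uh u' r phi' Hb Hadm' Hsol' Hxr T HT).
          pose proof (exp_pos (b * T)).
          assert (exp (b * T) <= 1) by (rewrite <- exp_0; apply exp_le_mono; nra).
          destruct (Rle_or_lt 0 (Kf alpha b uh r)); nra. }
        nra.
      - pose proof (K_down alpha b ul uh u p0 phi Hb Hadm Hsol Hx0 1 ltac:(lra)) as Hr1.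
        fold r in Hr1.
        assert (Kf alpha b ul p0 <= Kf alpha b ul p0 * exp (b * 1)).
        { apply (close_Kf_le (orbit_plus alpha b ul uh r)); auto.
          intros s [u' [phi' [T [Hadm' [Hsol' [HT Hs]]]]]]. subst s.
          pose proof (K_down alpha b ul uh u' r phi' Hb Hadm' Hsol' Hxr T HT).
          pose proof (exp_pos (b * T)).
          assert (exp (b * T) <= 1) by (rewrite <- exp_0; apply exp_le_mono; nra).
          destruct (Rle_or_lt (Kf alpha b ul r) 0); nra. }
        nra. }
    assert (HDC : forall p, D p -> Cset alpha b ul uh p).
    { intros p Hp. apply (Hclos p0); auto. }
    intros p. split; auto.
  - intros p Hp q. split.
    + intros Hq. destruct p as [xp yp]. apply reach; auto. apply HCK in Hp. apply Hp.
    + intros Hq. apply (Hclos p); auto.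
Qed.
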